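(* Let $n_1,\dots,n_k>1$ be integers and let $(\mathbb{Z},\Lambda)$ be the product of odometers described in the context, and put $n=(n_1,\dots,n_k)$, $n^p=\prod_{i=1}^kn_i^{p_i}$ for $p\in\mathbb{Z}^k$. Then $$\mathrm{Per}_{\mathbb{Z},\Lambda}=\mathrm{Per}_\Lambda=\{p\in\mathbb{Z}^k:n^p=1\}.$$
   Context: Let $k\ge1$. A $k$-graph is a countable small category $\Lambda$ together with a functor $d:\Lambda\to\mathbb{N}^k$ (the degree map) with the unique factorization property: for every $\mu\in\Lambda$ and $m,n\in\mathbb{N}^k$ with $d(\mu)=m+n$ there are unique $\alpha,\beta\in\Lambda$ with $d(\alpha)=m$, $d(\beta)=n$ and $\mu=\alpha\beta$. Write $\Lambda^n=d^{-1}(n)$, $\Lambda^0$ the vertices, $r,s$ range and source; $e_1,\dots,e_k$ is the standard basis of $\mathbb{N}^k$. Infinite paths: let $\Omega_k=\{(p,q)\in\mathbb{N}^k\times\mathbb{N}^k:p\le q\}$ with $r(p,q)=(p,p)$, $s(p,q)=(q,q)$, $(p,q)(q,m)=(p,m)$, $d(p,q)=q-p$. An infinite path is a degree-preserving functor $x:\Omega_k\to\Lambda$; $\Lambda^\infty$ is the set of infinite paths, $v\Lambda^\infty=\{x:x(0,0)=v\}$, and for $\mu\in\Lambda$, $x\in s(\mu)\Lambda^\infty$, $\mu x$ is the unique infinite path $y$ with $y(0,d(\mu))=\mu$ and $y(d(\mu)+p,d(\mu)+q)=x(p,q)$ for all $p\le q$. Self-similar actions: for a group $G$, a self-similar action $(G,\Lambda)$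 consists of an action of $G$ on $\Lambda$ by automorphisms (bijections preserving $d$, $r$, $s$), written $g\cdot\mu$, and a restriction map $(g,\mu)\mapsto g|_\mu\in G$ such that for all $g,h\in G$, $v\in\Lambda^0$ and $\mu,\nu$ with $s(\mu)=r(\nu)$: $g\cdot(\mu\nu)=(g\cdot\mu)(g|_\mu\cdot\nu)$; $g|_v=g$; $g|_{\mu\nu}=(g|_\mu)|_\nu$; $1_G|_\mu=1_G$; $(gh)|_\mu=g|_{h\cdot\mu}\,h|_\mu$. For $x\in\Lambda^\infty$, $(g\cdot x)(p,q)=g|_{x(0,p)}\cdot x(p,q)$. Products of odometers: $\Lambda$ is a $k$-graph with a single vertex such that $\Lambda^{e_i}=\{x^i_{\mathfrak s}:0\le\mathfrak{s}\le n_i-1\}$ for $1\le i\le k$, with factorization rules $x^i_{\mathfrak s}x^j_{\mathfrak t}=x^j_{\mathfrak t'}x^i_{\mathfrak s'}$ for $1\le i<j\le k$ whenever $\mathfrak{s},\mathfrak{s}'\in\{0,\dots,n_i-1\}$, $\mathfrak{t},\mathfrak{t}'\in\{0,\dots,n_j-1\}$ and $\mathfrak{s}+\mathfrak{t}n_i=\mathfrak{t}'+\mathfrak{s}'n_j$. The group $\mathbb{Z}$ acts self-similarly on $\Lambda$, determined by $1\cdot x^i_{\mathfrak s}=x^i_{(\mathfrak{s}+1)\bmod n_i}$ and $1|_{x^i_{\mathfrak s}}=0$ if $\mathfrak{s}<n_i-1$, $1|_{x^i_{n_i-1}}=1$. This action is pseudo free, locally faithful, satisfies the finite-state condition, and $\Lambda$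 is strongly connected and finite. Cycline triples and periodicity: a triple $(\mu,g,\nu)\in\Lambda\times G\times\Lambda$ with $s(\mu)=g\cdot s(\nu)$ is cycline if $\mu(g\cdot x)=\nu x$ for all $x\in s(\nu)\Lambda^\infty$. $\mathrm{Per}_{G,\Lambda}=\{d(\mu)-d(\nu):(\mu,g,\nu)\text{ cycline}\}\subseteq\mathbb{Z}^k$, and $\mathrm{Per}_\Lambda=\{d(\mu)-d(\nu):(\mu,1_G,\nu)\text{ cycline}\}$ (i.e. from pairs $(\mu,\nu)$ with $\mu x=\nu x$ for all $x\in s(\nu)\Lambda^\infty$). *)

(* Defs.v *)
From HB Require Import structures.
From mathcomp Require Import all_boot all_order all_algebra.
Set Implicit Arguments. Unset Strict Implicit. Unset Printing Implicit Defensive.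
Import Order.TTheory GRing.Theory Num.Theory.

Definition dvec (k : nat) := {ffun 'I_k -> nat}.
Definition zvec (k : nat) := {ffun 'I_k -> int}.
Definition dzero {k} : dvec k := [ffun => 0%N].
Definition dadd {k} (m n : dvec k) : dvec k := [ffun i => (m i + n i)%N].
Definition dsub {k} (q p : dvec k) : dvec k := [ffun i => (q i - p i)%N].
Definition dle {k} (p q : dvec k) : bool := [forall i, p i <= q i].
Definition dunit {k} (i : 'I_k) : dvec k := [ffun j => nat_of_bool (j == i)].
Definition ddiff {k} (m n : dvec k) : zvec k := [ffun i => (m i)%:Z - (n i)%:Z]%R.

(* A countable small category (vertices = objects, identified with identity
   morphisms kid v; composition kcomp is total but only meaningful on
   composable pairs) with a degree functor satisfying unique factorization. *)
Record kgraph (k : nat) := KGraph {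
  kV : Type;
  kP : Type;
  kr : kP -> kV;
  ks : kP -> kV;
  kid : kV -> kP;
  kcomp : kP -> kP -> kP;
  kd : kP -> dvec k;
  kg_countable : exists f : kP -> nat, injective f;
  kg_r_id : forall v, kr (kid v) = v;
  kg_s_id : forall v, ks (kid v) = v;
  kg_r_comp : forall a b, ks a = kr b -> kr (kcomp a b) = kr a;
  kg_s_comp : forall a b, ks a = kr b -> ks (kcomp a b) = ks b;
  kg_id_l : forall a, kcomp (kid (kr a)) a = a;
  kg_id_r : forall a, kcomp a (kid (ks a)) = a;
  kg_assoc : forall a b c, ks a = kr b -> ks b = kr c ->
      kcomp a (kcomp b c) = kcomp (kcomp a b) c;
  kg_d_id : forall v, kd (kid v) = dzero;
  kg_d_comp : forall a b, ks a = kr b -> kd (kcomp a b) = dadd (kd a) (kd b);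
  kg_fact_ex : forall mu (m n : dvec k), kd mu = dadd m n ->
      exists a b, [/\ ks a = kr b, kd a = m, kd b = n & mu = kcomp a b];
  kg_fact_uniq : forall a b a' b', ks a = kr b -> ks a' = kr b' ->
      kd a = kd a' -> kd b = kd b' -> kcomp a b = kcomp a' b' -> a = a' /\ b = b'
}.

Arguments kr {k L} _ : rename.
Arguments ks {k L} _ : rename.
Arguments kid {k L} _ : rename.
Arguments kcomp {k L} _ _ : rename.
Arguments kd {k L} _ : rename.

(* x (p,q) is given by x p q; only values with p <= q matter. *)
Definition infpath {k} (L : kgraph k) (x : dvec k -> dvec k -> kP L) : Prop :=
  exists F : dvec k -> kV L,
    [/\ forall p, x p p = kid (F p),
        forall p q, dle p q -> [/\ kd (x p q) = dsub q p, kr (x p q) = F p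
                                 & ks (x p q) = F q]
      & forall p q m, dle p q -> dle q m -> kcomp (x p q) (x q m) = x p m].

Definition is_concat {k} (L : kgraph k) (mu : kP L)
    (x y : dvec k -> dvec k -> kP L) : Prop :=
  [/\ infpath y, y dzero (kd mu) = mu
    & forall p q, dle p q -> y (dadd (kd mu) p) (dadd (kd mu) q) = x p q].

Record selfsim (G : zmodType) k (L : kgraph k) := SelfSim {
  act : G -> kP L -> kP L;
  actV : G -> kV L -> kV L;
  res : G -> kP L -> G;
  ss_bij : forall g, bijective (act g);
  ss_act0 : forall a, act 0%R a = a;
  ss_actD : forall g h a, act (g + h)%R a = act g (act h a);
  ss_actV0 : forall v, actV 0%R v = v;
  ss_actVD : forall g h v, actV (g + h)%R v = actV g (actV h v);
  ss_act_id : forall g v, act g (kid v) = kid (actV g v);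
  ss_d : forall g a, kd (act g a) = kd a;
  ss_r : forall g a, kr (act g a) = actV g (kr a);
  ss_s : forall g a, ks (act g a) = actV g (ks a);
  ss_comp : forall g a b, ks a = kr b ->
      act g (kcomp a b) = kcomp (act g a) (act (res g a) b);
  ss_res_id : forall g v, res g (kid v) = g;
  ss_res_comp : forall g a b, ks a = kr b -> res g (kcomp a b) = res (res g a) b;
  ss_res0 : forall a, res 0%R a = 0%R;
  ss_resD : forall g h a, res (g + h)%R a = (res g (act h a) + res h a)%R
}.

Definition gact {G : zmodType} {k} {L : kgraph k} (A : selfsim G L) (g : G)
    (x : dvec k -> dvec k -> kP L) : dvec k -> dvec k -> kP L :=
  fun p q => act A (res A g (x dzero p)) (x p q).

Definition cycline {G : zmodType} {k} {L : kgraph k} (A : selfsim G L)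
    (mu : kP L) (g : G) (nu : kP L) : Prop :=
  ks mu = actV A g (ks nu) /\
  forall x, infpath x -> x dzero dzero = kid (ks nu) ->
    exists y, is_concat mu (gact A g x) y /\ is_concat nu x y.

Definition Per_GL {G : zmodType} {k} {L : kgraph k} (A : selfsim G L)
    (p : zvec k) : Prop :=
  exists mu g nu, cycline A mu g nu /\ p = ddiff (kd mu) (kd nu).

Definition Per_L {k} (L : kgraph k) (p : zvec k) : Prop :=
  exists mu nu : kP L,
    [/\ ks mu = ks nu,
        forall x, infpath x -> x dzero dzero = kid (ks nu) ->
          exists y, is_concat mu x y /\ is_concat nu x y
      & p = ddiff (kd mu) (kd nu)].

Definition odometer_kgraph {k} (n : 'I_k -> nat) (L : kgraph k)
    (x : 'I_k -> nat -> kP L) : Prop :=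
  [/\ exists v : kV L, forall w, w = v,
      forall i s, s < n i -> kd (x i s) = dunit i,
      forall i mu, kd mu = dunit i -> exists2 s, s < n i & mu = x i s,
      forall i s t, s < n i -> t < n i -> x i s = x i t -> s = t
    & forall i j : 'I_k, i < j -> forall s t s' t',
        s < n i -> s' < n i -> t < n j -> t' < n j ->
        s + t * n i = t' + s' * n j ->
        kcomp (x i s) (x j t) = kcomp (x j t') (x i s')].

Definition odometer_action {k} (n : 'I_k -> nat) (L : kgraph k)
    (x : 'I_k -> nat -> kP L) (A : selfsim int L) : Prop :=
  forall i s, s < n i ->
    act A 1%R (x i s) = x i ((s + 1) %% n i) /\
    res A 1%R (x i s) = (if s < (n i).-1 then 0%R else 1%R).

Definition npow {k} (n : 'I_k -> nat) (p : zvec k) : rat :=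
  (\prod_(i < k) ((n i)%:R ^ (p i)))%R.

(* Main.v *)
Require Import Defs.
From HB Require Import structures.
From mathcomp Require Import all_boot all_order all_algebra.
From mathcomp Require Import zify ring.
From Stdlib Require Import ClassicalEpsilon FunctionalExtensionality.
Set Implicit Arguments. Unset Strict Implicit. Unset Printing Implicit Defensive.
Import GRing.Theory Num.Theory.

Section Dvec.
Variable k : nat.
Implicit Types m p q : dvec k.

Lemma dleP p q : reflect (forall i, p i <= q i) (dle p q).
Proof. exact: forallP. Qed.

Lemma dadd_eq m p : dadd m p = dadd p m.
Proof. by apply/ffunP=> i; rewrite !ffunE addnC. Qed.

Lemma dadd0 m : dadd m dzero = m.
Proof. by apply/ffunP=> i; rewrite !ffunE addn0. Qed.

Lemma dadd_sub p q : dle p q -> dadd p (dsub q p) = q.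
Proof. by move/dleP=> H; apply/ffunP=> i; rewrite !ffunE subnKC. Qed.

Lemma daddK m p q : dadd m p = dadd m q -> p = q.
Proof.
move=> H; apply/ffunP=> i; move/ffunP: H => /(_ i); rewrite !ffunE.
by move/addnI.
Qed.

Lemma dle_addr m p : dle m (dadd m p).
Proof. by apply/dleP=> i; rewrite ffunE leq_addr. Qed.

Lemma dle0 m : dle dzero m.
Proof. by apply/dleP=> i; rewrite ffunE. Qed.

Lemma dle_refl m : dle m m.
Proof. by apply/dleP. Qed.

Lemma dle_trans m p q : dle m p -> dle p q -> dle m q.
Proof. move/dleP=> H1 /dleP H2; apply/dleP=> i; exact: leq_trans (H1 i) (H2 i). Qed.

Lemma dle_add2l m p q : dle p q -> dle (dadd m p) (dadd m q).
Proof. by move/dleP=> H; apply/dleP=> i; rewrite !ffunE leq_add2l. Qed.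

Lemma dsub_addl m p q : dsub (dadd m q) (dadd m p) = dsub q p.
Proof. by apply/ffunP=> i; rewrite !ffunE subnDl. Qed.

Lemma dsub0 m : dsub m dzero = m.
Proof. by apply/ffunP=> i; rewrite !ffunE subn0. Qed.

Lemma dsubaddl m p : dsub (dadd m p) m = p.
Proof. by apply/ffunP=> i; rewrite !ffunE addKn. Qed.

Lemma dsubaddr m p : dsub (dadd m p) p = m.
Proof. by apply/ffunP=> i; rewrite !ffunE addnK. Qed.

Lemma dsub_comp p q m : dle p q -> dle q m -> dadd (dsub q p) (dsub m q) = dsub m p.
Proof.
move/dleP=> H1 /dleP H2; apply/ffunP=> i; rewrite !ffunE.
have := H1 i; have := H2 i; lia.
Qed.

Definition tot m := \sum_(i < k) m i.

Lemma tot_dadd m p : tot (dadd m p) = tot m + tot p.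
Proof. by rewrite /tot -big_split; apply: eq_bigr=> i _; rewrite ffunE. Qed.

Lemma tot_dunit i : tot (dunit i) = 1.
Proof.
rewrite /tot (bigD1 i) //= big1 ?ffunE ?eqxx // => j /negbTE ji.
by rewrite ffunE ji.
Qed.

Lemma tot0 m : tot m = 0 -> m = dzero.
Proof.
move=> H; apply/ffunP=> i; rewrite ffunE.
have: m i <= tot m by rewrite /tot (bigD1 i) //= leq_addr.
by rewrite H; case: (m i).
Qed.

Lemma dnz m : m <> dzero -> exists i, 0 < m i.
Proof.
move=> H; case: (boolP [exists i, 0 < m i]) => [/existsP//|/existsPn H2].
exfalso; apply: H; apply/ffunP=> i; rewrite ffunE; move: (H2 i); by case: (m i).
Qed.

Lemma dunit_split m i : 0 < m i -> m = dadd (dunit i) (dsub m (dunit i)).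
Proof.
move=> H; apply/ffunP=> j; rewrite !ffunE; case: eqP => [->|] /=; lia.
Qed.

End Dvec.
Section Odo.
Variables (k : nat) (n : 'I_k -> nat) (L : kgraph k) (e : 'I_k -> nat -> kP L).
Hypothesis hn : forall i, 1 < n i.
Hypothesis HO : odometer_kgraph n e.
Implicit Types a b c : kP L.

Lemma vtx (v w : kV L) : v = w.
Proof. by case: HO => [[v0 H]] _ _ _ _; rewrite (H v) (H w). Qed.

Lemma cok (a b : kP L) : ks a = kr b.
Proof. exact: vtx. Qed.

Lemma kd_comp a b : kd (kcomp a b) = dadd (kd a) (kd b).
Proof. exact: kg_d_comp (cok a b). Qed.

Lemma kd_e i s : s < n i -> kd (e i s) = dunit i.
Proof. by case: HO => _ H _ _ _; apply: H. Qed.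

Lemma e_inj i s t : s < n i -> t < n i -> e i s = e i t -> s = t.
Proof. by case: HO => _ _ _ H _; apply: H. Qed.

Lemma edge_of a i : kd a = dunit i -> exists2 s, s < n i & a = e i s.
Proof. by case: HO => _ _ H _ _; apply: H. Qed.

Lemma deg0 a : kd a = dzero -> a = kid (kr a).
Proof.
move=> H.
have [] := kg_fact_uniq (a:=kid (kr a)) (b:=a) (a':=a) (b':=kid (ks a)).
- by rewrite kg_s_id.
- by rewrite kg_r_id.
- by rewrite kg_d_id H.
- by rewrite kg_d_id H.
- by rewrite kg_id_l kg_id_r.
by move=> ->.
Qed.

Lemma comp_id_l v b : kcomp (kid v) b = b.
Proof. by rewrite (vtx v (kr b)) kg_id_l. Qed.

Lemma assoc a b c : kcomp a (kcomp b c) = kcomp (kcomp a b) c.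
Proof. exact: kg_assoc (cok _ _) (cok _ _). Qed.

Lemma fuq a b a' b' : kd a = kd a' -> kd b = kd b' -> kcomp a b = kcomp a' b' ->
  a = a' /\ b = b'.
Proof. by move=> *; apply: kg_fact_uniq => //; apply: cok. Qed.

Lemma fuq1 a b a' b' : kd a = kd a' -> kcomp a b = kcomp a' b' -> a = a' /\ b = b'.
Proof.
move=> H1 H2; apply: fuq => //.
have := congr1 kd H2; rewrite !kd_comp H1; exact: daddK.
Qed.

Lemma peel a i : 0 < kd a i -> exists s a', [/\ s < n i, a = kcomp (e i s) a'
   & kd a' = dsub (kd a) (dunit i)].
Proof.
move=> /dunit_split H.
have [b [c [_ Hb Hc Ha]]] := kg_fact_ex H.
have [s Hs Hbe] := edge_of Hb.
by exists s, c; split => //; rewrite Ha Hbe.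
Qed.

Lemma swap i j s t : i != j -> s < n i -> t < n j ->
  exists t' s', [/\ t' < n j, s' < n i, s + t * n i = t' + s' * n j &
     kcomp (e i s) (e j t) = kcomp (e j t') (e i s')].
Proof.
move=> ij Hs Ht.
have Hlt : s + t * n i < n j * n i.
  have : t.+1 * n i <= n j * n i by rewrite leq_mul2r Ht orbT.
  rewrite mulSn; lia.
have Hi := ltn_trans (ltnSn 0) (hn i); have Hj := ltn_trans (ltnSn 0) (hn j).
exists ((s + t * n i) %% n j), ((s + t * n i) %/ n j); split.
- by rewrite ltn_mod.
- by rewrite ltn_divLR // (mulnC (n i)).
- by rewrite [in RHS]addnC -divn_eq.
case: HO => _ _ _ _ H.
case: (ltngtP i j) => [lij|lji|/val_inj/eqP]; last by rewrite (negbTE ij).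
- by apply: H => //; first [rewrite ltn_divLR // (mulnC (n i)) | rewrite ltn_mod | rewrite [in RHS]addnC -divn_eq | rewrite [in LHS]addnC -divn_eq].
- by symmetry; apply: H => //; first [rewrite ltn_divLR // (mulnC (n i)) | rewrite ltn_mod | rewrite [in RHS]addnC -divn_eq | rewrite [in LHS]addnC -divn_eq].
Qed.

Definition Nn (m : dvec k) := \prod_(i < k) n i ^ m i.

Lemma Nn_dadd m m' : Nn (dadd m m') = Nn m * Nn m'.
Proof. by rewrite /Nn -big_split; apply: eq_bigr=> i _; rewrite ffunE expnD. Qed.

Lemma Nn0 : Nn dzero = 1.
Proof. by rewrite /Nn big1 // => i _; rewrite ffunE. Qed.

Lemma Nn_dunit i : Nn (dunit i) = n i.
Proof.
rewrite /Nn (bigD1 i) //= big1 ?ffunE ?eqxx ?muln1 ?expn1 // => j /negbTE ji.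
by rewrite ffunE ji.
Qed.

Lemma Nn_gt0 m : 0 < Nn m.
Proof. apply: prodn_gt0 => i; rewrite expn_gt0; have := hn i; by case: (n i). Qed.

Lemma Nn_dvd p q : dle p q -> Nn p %| Nn q.
Proof. by move=> H; rewrite -(dadd_sub H) Nn_dadd dvdn_mulr. Qed.

Lemma kd_ecomp i s a : s < n i -> kd (kcomp (e i s) a) = dadd (dunit i) (kd a).
Proof. by move=> H; rewrite kd_comp kd_e. Qed.

Inductive R : kP L -> nat -> Prop :=
| R0 a : kd a = dzero -> R a 0
| RS i s a v : s < n i -> R a v -> R (kcomp (e i s) a) (s + n i * v).

Lemma R_total_t t a : tot (kd a) <= t -> exists v, R a v.
Proof.
elim: t a => [|t IH] a Ht.
  by exists 0; apply: R0; apply: tot0; move: Ht; case: (tot _).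
case: (boolP (kd a == dzero)) => [/eqP H|/eqP H]; first by exists 0; apply: R0.
have [i Hi] := dnz H.
have [s [a' [Hs Ha Ha']]] := peel Hi.
have : tot (kd a') <= t.
  move: Ht; rewrite Ha kd_ecomp // tot_dadd tot_dunit; lia.
move/IH=> [v Hv]; exists (s + n i * v); rewrite Ha; exact: RS.
Qed.

Lemma R_total a : exists v, R a v.
Proof. exact: (@R_total_t (tot (kd a))). Qed.

Lemma R_deg a v : R a v -> v < Nn (kd a).
Proof.
elim=> {a v} [a ->|i s a v Hs _ IH]; first by rewrite Nn0.
rewrite kd_ecomp // Nn_dadd Nn_dunit.
have : s.+1 + n i * v <= n i + n i * v by rewrite leq_add2r.
have : n i * v.+1 <= n i * Nn (kd a) by rewrite leq_mul2l IH orbT.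
rewrite mulnS; lia.
Qed.

Lemma R_inv a v : R a v -> (kd a = dzero /\ v = 0) \/
  exists i s a' v', [/\ s < n i, a = kcomp (e i s) a', v = s + n i * v' & R a' v'].
Proof.
case=> [a0 H|i s a0 v0 Hs H]; [by left | right; by exists i, s, a0, v0].
Qed.

Lemma R_nz i s a : s < n i -> kd (kcomp (e i s) a) <> dzero.
Proof. by move=> Hs /ffunP /(_ i); rewrite kd_ecomp // !ffunE eqxx. Qed.

Lemma R_uniq_t t a v w : tot (kd a) <= t -> R a v -> R a w -> v = w.
Proof.
elim: t a v w => [|t IH] a v w Ht /R_inv Hv /R_inv Hw.
- case: Hv => [[_ ->]|[i [s [a1 [v1 [Hs Ha _ _]]]]]]; last first.
    by move: Ht; rewrite Ha kd_ecomp // tot_dadd tot_dunit.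
  case: Hw => [[_ ->]|[i [s [a1 [v1 [Hs Ha _ _]]]]]] //.
  by move: Ht; rewrite Ha kd_ecomp // tot_dadd tot_dunit.
case: Hv => [[H0 ->]|[i [s [a1 [v1 [Hs Ha -> Hv1]]]]]].
  case: Hw => [[_ ->]|[i [s [a1 [v1 [Hs Ha _ _]]]]]] //.
  by move: H0; rewrite Ha; move/R_nz.
case: Hw => [[H0 _]|[j [t0 [a2 [v2 [Ht0 Ha2 -> Hv2]]]]]].
  by move: H0; rewrite Ha; move/R_nz.
have Ht1 : tot (kd a1) <= t by move: Ht; rewrite Ha kd_ecomp // tot_dadd tot_dunit.
have Ht2 : tot (kd a2) <= t by move: Ht; rewrite Ha2 kd_ecomp // tot_dadd tot_dunit.
have Hd : dadd (dunit i) (kd a1) = dadd (dunit j) (kd a2).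
  by rewrite -(kd_ecomp a1 Hs) -Ha Ha2 kd_ecomp.
case: (eqVneq i j) => [ij|ij].
  subst j.
  have [E1 E2] : e i s = e i t0 /\ a1 = a2.
    by apply: fuq1; rewrite ?kd_e // -Ha.
  have -> := e_inj Hs Ht0 E1; subst a2.
  by rewrite (IH _ _ _ Ht1 Hv1 Hv2).
have Hj1 : 0 < kd a1 j.
  move/ffunP: Hd => /(_ j); rewrite !ffunE eqxx eq_sym (negbTE ij) /=.
  lia.
have [t1 [mu [Ht1' Ha1 Hmu]]] := peel Hj1.
have [w0 Hw0] := R_total mu.
have [t' [s' [Ht' Hs' Heq Hsw]]] := swap ij Hs Ht1'.
have Ha' : a = kcomp (e j t') (kcomp (e i s') mu).
  by rewrite Ha Ha1 assoc Hsw -assoc.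
have [E1 E2] : e j t' = e j t0 /\ kcomp (e i s') mu = a2.
  by apply: fuq1; rewrite ?kd_e // -Ha' -Ha2.
have Et := e_inj Ht' Ht0 E1; subst t0.
have -> : v1 = t1 + n j * w0 by apply: (IH _ _ _ Ht1 Hv1); rewrite Ha1; exact: RS.
have -> : v2 = s' + n i * w0.
  by apply: (IH _ _ _ Ht2 Hv2); rewrite -E2; exact: RS.
nia.
Qed.

Definition val a : nat :=
  proj1_sig (constructive_indefinite_description _ (R_total a)).

Lemma R_val a : R a (val a).
Proof. by rewrite /val; case: constructive_indefinite_description. Qed.

Lemma val_R a v : R a v -> val a = v.
Proof. move=> H; exact: (R_uniq_t (leqnn _) (R_val a) H). Qed.

Lemma val_lt a : val a < Nn (kd a).
Proof. exact: R_deg (R_val a). Qed.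

Lemma val_ecomp i s a : s < n i -> val (kcomp (e i s) a) = s + n i * val a.
Proof. by move=> Hs; apply: val_R; apply: RS => //; apply: R_val. Qed.

Lemma val0 a : kd a = dzero -> val a = 0.
Proof. by move=> H; apply: val_R; apply: R0. Qed.

Lemma val_comp a b : val (kcomp a b) = val a + Nn (kd a) * val b.
Proof.
suff: forall v, R a v -> val (kcomp a b) = v + Nn (kd a) * val b.
  by apply; apply: R_val.
move=> v H; elim: H b => {a v} [a Ha|i s a v Hs _ IH] b.
  by rewrite Ha Nn0 (deg0 Ha) comp_id_l mul1n.
rewrite -assoc val_ecomp // IH kd_ecomp // Nn_dadd Nn_dunit; nia.
Qed.

Lemma divmod_uniq N s t v w : s < N -> t < N -> s + N * v = t + N * w -> s = t /\ v = w.
Proof.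
move=> Hs Ht H.
have Est : s = t.
  have := congr1 (modn^~ N) H; rewrite /= ![_ + N * _]addnC !(mulnC N) !modnMDl.
  by rewrite !modn_small.
split=> //; subst t; move/addnI: H => /eqP; rewrite eqn_mul2l.
by case/orP=> [/eqP N0|/eqP //]; move: Hs; rewrite N0.
Qed.

Lemma val_inj a b : kd a = kd b -> val a = val b -> a = b.
Proof.
move=> Hd Hv.
suff: forall v, R a v -> forall b, kd a = kd b -> val b = v -> a = b.
  by move/(_ _ (R_val a) b Hd); apply; rewrite Hv.
move=> {b Hd Hv} v H; elim: H => {a v} [a Ha|i s a v Hs _ IH] b Hd Hv.
  by rewrite (deg0 Ha) (deg0 (etrans (esym Hd) Ha)) (vtx (kr a) (kr b)).
have Hi : 0 < kd b i by rewrite -Hd kd_ecomp // !ffunE eqxx.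
have [t [b1 [Ht Hb Hb1]]] := peel Hi.
move: Hv; rewrite Hb val_ecomp // => /esym /(divmod_uniq Hs Ht) [Est Ev]; subst t.
congr kcomp; apply: IH => //.
by rewrite Hb1 -Hd kd_ecomp // dsubaddl.
Qed.

Lemma vtx_ex : exists v : kV L, True.
Proof. by case: HO => [[v _]] _ _ _ _; exists v. Qed.
Definition some_vtx : kV L :=
  proj1_sig (constructive_indefinite_description _ vtx_ex).

Lemma val_ex_t t m v : tot m <= t -> v < Nn m -> exists a, kd a = m /\ val a = v.
Proof.
have Hz : forall v, v < Nn dzero -> exists a, kd a = dzero /\ val a = v.
  move=> v0; rewrite Nn0 ltnS leqn0 => /eqP ->.
  by exists (kid some_vtx); rewrite kg_d_id val0 // kg_d_id.
elim: t m v => [|t IH] m v Ht Hv.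
  by move: Ht Hv; rewrite leqn0 => /eqP /tot0 ->; apply: Hz.
case: (boolP (m == dzero)) => [/eqP E|/eqP H]; first by move: Hv; rewrite E; apply: Hz.
have [i Hi] := dnz H.
have Hm := dunit_split Hi.
have Hni : 0 < n i by have := hn i; case: (n i).
have Hlt : v %/ n i < Nn (dsub m (dunit i)).
  by rewrite ltn_divLR // mulnC -Nn_dunit -Nn_dadd -Hm.
have Ht' : tot (dsub m (dunit i)) <= t by move: Ht; rewrite {1}Hm tot_dadd tot_dunit.
have [a [Ha Hva]] := IH _ _ Ht' Hlt.
have Hs : v %% n i < n i by rewrite ltn_mod.
exists (kcomp (e i (v %% n i)) a); split.
  by rewrite kd_ecomp // Ha -Hm.
by rewrite val_ecomp // Hva addnC mulnC -divn_eq.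
Qed.

Lemma val_ex m v : v < Nn m -> exists a, kd a = m /\ val a = v.
Proof. exact: val_ex_t (leqnn _). Qed.

Definition pv m v : kP L :=
  proj1_sig (constructive_indefinite_description _
    (val_ex (ltn_pmod v (Nn_gt0 m)))).

Lemma pv_spec m v : kd (pv m v) = m /\ val (pv m v) = v %% Nn m.
Proof. by rewrite /pv; case: constructive_indefinite_description. Qed.

Lemma kd_pv m v : kd (pv m v) = m.
Proof. by case: (pv_spec m v). Qed.

Lemma val_pv m v : val (pv m v) = v %% Nn m.
Proof. by case: (pv_spec m v). Qed.

Lemma pv_val a : pv (kd a) (val a) = a.
Proof. by apply: val_inj; rewrite ?kd_pv // val_pv modn_small // val_lt. Qed.

Lemma pv_eq m v w : v = w %[mod Nn m] -> pv m v = pv m w.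
Proof. by move=> H; apply: val_inj; rewrite ?kd_pv // !val_pv. Qed.

Implicit Types (xx y : dvec k -> dvec k -> kP L) (V : dvec k -> nat).

Lemma modn_split B N1 N2 : 0 < N1 -> 0 < N2 ->
  B %% N1 + N1 * ((B %/ N1) %% N2) = B %% (N1 * N2).
Proof.
move=> H1 H2.
set Y := B %% N1 + N1 * ((B %/ N1) %% N2).
have HY : Y < N1 * N2.
  have h1 : B %% N1 < N1 by rewrite ltn_mod.
  have h2 : (B %/ N1) %% N2 < N2 by rewrite ltn_mod.
  rewrite /Y; move: (B %% N1) (B %/ N1 %% N2) h1 h2 => u w h1 h2; nia.
have E : B = (B %/ N1 %/ N2) * (N1 * N2) + Y.
  rewrite /Y {1}(divn_eq B N1) {1}(divn_eq (B %/ N1) N2).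
  move: (B %/ N1 %/ N2) (B %/ N1 %% N2) (B %% N1) => u w z; ring.
by rewrite {1}E modnMDl modn_small.
Qed.

Definition ival (V : dvec k -> nat) := forall p q, dle p q -> V p = V q %% Nn p.

Lemma ival_lt V : ival V -> forall q, V q < Nn q.
Proof. by move=> H q; rewrite (H q q (dle_refl q)) ltn_mod Nn_gt0. Qed.

Definition poi (V : dvec k -> nat) : dvec k -> dvec k -> kP L :=
  fun p q => pv (dsub q p) (V q %/ Nn p).

Lemma Nn_sub p q : dle p q -> Nn q = Nn p * Nn (dsub q p).
Proof. by move=> H; rewrite -Nn_dadd dadd_sub. Qed.

Lemma dsub_self (p : dvec k) : dsub p p = dzero.
Proof. by apply/ffunP=> i; rewrite !ffunE subnn. Qed.

Lemma poi_inf V : ival V -> infpath (poi V).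
Proof.
move=> HV; exists (fun _ => some_vtx); split.
- move=> p; rewrite (@deg0 (poi V p p)) ?kd_pv ?dsub_self //.
  by rewrite (vtx (kr _) some_vtx).
- by move=> p q _; split; rewrite ?kd_pv //; apply: vtx.
move=> p q m Hpq Hqm; apply: val_inj.
  by rewrite kd_comp !kd_pv dsub_comp.
rewrite val_comp !val_pv kd_pv.
rewrite (HV q m Hqm) (Nn_sub Hpq) mulnC -modn_divl.
rewrite [Nn (dsub q p) * Nn p]mulnC divnMA modn_mod.
by rewrite modn_split ?Nn_gt0 // -Nn_dadd dsub_comp.
Qed.

Lemma poi_val0 V : ival V -> forall q, val (poi V dzero q) = V q.
Proof. by move=> HV q; rewrite val_pv dsub0 Nn0 divn1 modn_small // ival_lt. Qed.

Definition Vx (xx : dvec k -> dvec k -> kP L) q := val (xx dzero q).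

Lemma ipath_comp xx : infpath xx -> forall p q m, dle p q -> dle q m ->
  kcomp (xx p q) (xx q m) = xx p m.
Proof. by case=> F [_ _ H]. Qed.

Lemma ipath_kd xx : infpath xx -> forall p q, dle p q -> kd (xx p q) = dsub q p.
Proof. by case=> F [_ H _] p q /H []. Qed.

Lemma Vx_split xx : infpath xx -> forall p q, dle p q ->
  Vx xx q = Vx xx p + Nn p * val (xx p q).
Proof.
move=> Hx p q Hpq; rewrite /Vx -(ipath_comp Hx (dle0 p) Hpq) val_comp.
by rewrite (ipath_kd Hx (dle0 p)) dsub0.
Qed.

Lemma ival_of xx : infpath xx -> ival (Vx xx).
Proof.
move=> Hx p q Hpq; rewrite (Vx_split Hx Hpq) addnC mulnC modnMDl modn_small //.
by move: (val_lt (xx dzero p)); rewrite (ipath_kd Hx (dle0 p)) dsub0.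
Qed.

Lemma infpath_poi xx : infpath xx -> forall p q, dle p q -> xx p q = poi (Vx xx) p q.
Proof.
move=> Hx p q Hpq; rewrite /poi -{1}(pv_val (xx p q)) (ipath_kd Hx Hpq).
congr pv; rewrite (Vx_split Hx Hpq) addnC mulnC divnMDl ?Nn_gt0 // divn_small ?addn0 //.
by move: (val_lt (xx dzero p)); rewrite (ipath_kd Hx (dle0 p)) dsub0.
Qed.

Definition cat u (a : dvec k) V q := (u + Nn a * V (dsub q a)) %% Nn q.

Lemma dle_qa (q a : dvec k) : dle q (dadd a (dsub q a)).
Proof. apply/dleP=> i; rewrite !ffunE; lia. Qed.

Lemma dsub_mono (p q a : dvec k) : dle p q -> dle (dsub p a) (dsub q a).
Proof. move/dleP=> H; apply/dleP=> i; rewrite !ffunE; have := H i; lia. Qed.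

Lemma cat_any (u : nat) (a : dvec k) V (q Q : dvec k) : ival V -> dle (dsub q a) Q ->
  cat u a V q = (u + Nn a * V Q) %% Nn q.
Proof.
move=> HV HQ; rewrite /cat (HV _ _ HQ) muln_modr -Nn_dadd.
have H := Nn_dvd (dle_qa q a).
by rewrite -[LHS](modn_dvdm _ H) modnDmr modn_dvdm.
Qed.

Lemma cat_ival (u : nat) (a : dvec k) V : ival V -> ival (cat u a V).
Proof.
move=> HV p q Hpq.
rewrite (cat_any u HV (dsub_mono a Hpq)) (cat_any u HV (dle_refl _)).
by rewrite modn_dvdm // Nn_dvd.
Qed.

Lemma is_concat_poi mu xx : infpath xx ->
  is_concat mu xx (poi (cat (val mu) (kd mu) (Vx xx))).
Proof.
move=> Hx; have HV := ival_of Hx; split.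
- exact: poi_inf (cat_ival _ _ HV).
- rewrite /poi dsub0 Nn0 divn1 -[RHS](pv_val mu); apply: pv_eq.
  by rewrite /cat modn_mod addnC mulnC modnMDl.
move=> p q Hpq; rewrite (infpath_poi Hx Hpq) /poi dsub_addl; congr pv.
rewrite /cat dsubaddl modn_small.
  have E : (val mu + Nn (kd mu) * Vx xx q) %/ Nn (kd mu) = Vx xx q.
    by rewrite addnC mulnC divnMDl ?Nn_gt0 // divn_small ?addn0 // val_lt.
  by rewrite Nn_dadd divnMA E.
rewrite Nn_dadd.
have h1 := val_lt mu; have h2 := ival_lt HV q.
move: (val mu) (Vx xx q) h1 h2 => u w h1 h2; nia.
Qed.

Lemma concat_start mu xx y : is_concat mu xx y ->
  forall p, y dzero (dadd (kd mu) p) = kcomp mu (xx dzero p).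
Proof.
case=> Hy H0 Hc p.
rewrite -(ipath_comp Hy (dle0 (kd mu)) (dle_addr (kd mu) p)) H0.
by have := Hc dzero p (dle0 p); rewrite dadd0 => ->.
Qed.

Lemma PL_of_eq (a b : dvec k) : Nn a = Nn b -> Per_L L (ddiff a b).
Proof.
move=> E; exists (pv a 0), (pv b 0); split; first exact: vtx.
  move=> xx Hx _; exists (poi (cat 0 a (Vx xx))); split.
    by have := is_concat_poi (pv a 0) Hx; rewrite val_pv kd_pv mod0n.
  have -> : cat 0 a (Vx xx) = cat 0 b (Vx xx).
    apply: functional_extensionality => q.
    have HV := ival_of Hx.
    rewrite (cat_any 0 HV (Q:=q)) ?(cat_any 0 HV (Q:=q)) ?E //.
      by apply/dleP=> i; rewrite !ffunE leq_subr.
    by apply/dleP=> i; rewrite !ffunE leq_subr.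
  by have := is_concat_poi (pv b 0) Hx; rewrite val_pv kd_pv mod0n.
by rewrite !kd_pv.
Qed.

Definition Vc (w : nat) (q : dvec k) := w %% Nn q.

Lemma Vc_ival w : ival (Vc w).
Proof. by move=> p q Hpq; rewrite /Vc modn_dvdm // Nn_dvd. Qed.

Lemma poi_Vc0 w q : poi (Vc w) dzero q = pv q w.
Proof. by rewrite /poi /Vc dsub0 Nn0 divn1; apply: pv_eq; rewrite modn_mod. Qed.

Lemma PGL_eq (G : zmodType) (A : selfsim G L) mu g nu :
  cycline A mu g nu -> Nn (kd mu) = Nn (kd nu).
Proof.
case=> _ Hc.
set a := kd mu; set b := kd nu.
have key : forall xx, infpath xx ->
    val mu + Nn a * val (act A g (xx dzero b)) = val nu + Nn b * val (xx dzero a).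
  move=> xx Hx.
  have H00 : xx dzero dzero = kid (ks nu).
    rewrite (@deg0 (xx dzero dzero)) ?(ipath_kd Hx (dle_refl _)) ?dsub_self //.
    by rewrite (vtx (kr _) (ks nu)).
  have [y [Hy1 Hy2]] := Hc xx Hx H00.
  have E1 := concat_start Hy1 b; have E2 := concat_start Hy2 a.
  rewrite -/a -/b dadd_eq E1 /gact H00 ss_res_id in E2.
  by have := congr1 val E2; rewrite !val_comp.
have Ha := Nn_gt0 a; have Hb := Nn_gt0 b.
have D1 : Nn a %| Nn b.
  case: (ltngtP (Nn a) 1) => [|Ha1|->]; [move=> ?; lia| |by rewrite dvd1n].
  have K0 := key _ (poi_inf (Vc_ival 0)); have K1 := key _ (poi_inf (Vc_ival 1)).
  rewrite !poi_Vc0 !val_pv mod0n modn_small // in K0 K1.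
  have E : Nn a * val (act A g (pv b 1)) =
           Nn a * val (act A g (pv b 0)) + Nn b by lia.
  by move: (dvdn_mulr (val (act A g (pv b 1))) (dvdnn (Nn a)));
    rewrite E dvdn_addr // dvdn_mulr.
have D2 : Nn b %| Nn a.
  case: (ltngtP (Nn b) 1) => [|Hb1|->]; [move=> ?; lia| |by rewrite dvd1n].
  pose lam w := act A (- g)%R (pv b w).
  have Klam : forall w, val (act A g (poi (Vc (val (lam w))) dzero b)) = w %% Nn b.
    move=> w; rewrite poi_Vc0.
    have -> : pv b (val (lam w)) = lam w.
      by rewrite -{1}(kd_pv b w) -(ss_d A (- g)%R) pv_val.
    by rewrite /lam -ss_actD GRing.subrr ss_act0 val_pv.
  have K0 := key _ (poi_inf (Vc_ival (val (lam 0)))).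
  have K1 := key _ (poi_inf (Vc_ival (val (lam 1)))).
  rewrite !Klam mod0n modn_small // in K0 K1.
  set Y0 := val (poi _ dzero a) in K0; set Y1 := val (poi _ dzero a) in K1.
  have E : Nn b * Y1 = Nn b * Y0 + Nn a by lia.
  by move: (dvdn_mulr Y1 (dvdnn (Nn b))); rewrite E dvdn_addr // dvdn_mulr.
by apply/eqP; rewrite eqn_dvd D1 D2.
Qed.

Lemma npow_ddiff (a b : dvec k) :
  npow n (ddiff a b) = ((Nn a)%:R / (Nn b)%:R)%R.
Proof.
rewrite /npow /Nn !natr_prod -prodf_div; apply: eq_bigr => i _.
rewrite ffunE !natrX expfzDr; last first.
  by rewrite pnatr_eq0; have := hn i; case: (n i).
by rewrite -exprnN.
Qed.

Definition posp (p : zvec k) : dvec k :=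
  [ffun i => match p i with Posz m => m | Negz _ => 0 end].
Definition negp (p : zvec k) : dvec k :=
  [ffun i => match p i with Posz _ => 0 | Negz m => m.+1 end].

Lemma ddiff_pn p : ddiff (posp p) (negp p) = p.
Proof.
apply/ffunP=> i; rewrite !ffunE; case: (p i) => m.
  by rewrite GRing.subr0.
by rewrite NegzE GRing.sub0r.
Qed.
End Odo.

Theorem theorem7p5 (k : nat) (hk : (0 < k)%N) (n : 'I_k -> nat)
    (hn : forall i, (1 < n i)%N)
    (L : kgraph k) (x : 'I_k -> nat -> kP L) (A : selfsim int L) :
  odometer_kgraph n x -> odometer_action n x A ->
  forall p : zvec k,
    (Per_GL A p <-> Per_L L p) /\ (Per_L L p <-> npow n p = 1%R).
Proof.
move=> HO _ p.
have PLGL : Per_L L p -> Per_GL A p.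
  case=> mu [nu [Hs Hx ->]]; exists mu, 0%R, nu; split=> //; split.
    by rewrite ss_actV0.
  move=> xx Hxx H0; have [y [H1 H2]] := Hx xx Hxx H0; exists y; split=> //.
  have -> : gact A 0%R xx = xx; last by [].
  apply: functional_extensionality => p0; apply: functional_extensionality => q0.
  by rewrite /gact ss_res0 ss_act0.
have GLnp : Per_GL A p -> npow n p = 1%R.
  case=> mu [g [nu [Hc ->]]].
  rewrite (npow_ddiff hn) (PGL_eq hn HO Hc) GRing.divff //.
  by rewrite pnatr_eq0 -lt0n Nn_gt0.
have npPL : npow n p = 1%R -> Per_L L p.
  rewrite -(ddiff_pn p) (npow_ddiff hn) => /GRing.divr1_eq /eqP.
  rewrite eqr_nat => /eqP E.
  have := PL_of_eq hn HO E. by [].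
split; split; auto.
Qed.
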